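(* Let $1\le p_1\le\cdots\le p_d\le n$ be integers and let $G_0=G_0(p_1,\ldots,p_d)$ be the $d$-uniform $d$-partite hypergraph with vertex classes $V_1,\ldots,V_d$, each identified with $[n]$, in which a $d$-tuple $(x_1,\ldots,x_d)\in[n]^d$ (the edge containing vertex $x_i$ of $V_i$ for each $i$) is a NON-edge if and only if $x_{(i)}\ge p_i$ for every $1\le i\le d$. Then $W_n(p_1,\ldots,p_d)\le \|G_0\|$, where $\|G_0\|$ is the number of edges of $G_0$.
   Context: A $d$-uniform $d$-partite hypergraph has vertex classes $V_1,\ldots,V_d$ and edges that contain exactly one vertex from each class; only such $d$-sets are considered as possible edges. A copy of $K^d_{p_1,\ldots,p_d}$ in $H$ is a permutation $\pi:[d]\to[d]$ together with sets $S_i\subseteq V_i$, $|S_i|=p_{\pi(i)}$, such that all $d$-sets with one vertex from each $S_i$ are edges. $H$ is weakly $K^d_{p_1,\ldots,p_d}$-saturated if its non-edges can be added one at a time in some order so that each added edge creates a new copy of $K^d_{p_1,\ldots,p_d}$ containing that edge. $W_n(p_1,\ldots,p_d)$ is the minimum number of edges in a weakly $K^d_{p_1,\ldots,p_d}$-saturated such hypergraph with $n$ vertices in each class. For $x\in[n]^d$, $x_{(i)}$ is the $i$-th smallest entry of $x$ sorted with repetitions. *)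

(* Defs.v *)
From mathcomp Require Import all_boot all_order all_fingroup.
From mathcomp Require Import boolp.
Set Implicit Arguments. Unset Strict Implicit. Unset Printing Implicit Defensive.

(* Vertex classes V_1..V_d are indexed by 'I_d; each class is 'I_n, where the
   ordinal k represents the element k+1 of [n] = {1,...,n}. *)
Definition tup (d n : nat) := {ffun 'I_d -> 'I_n}.
Definition hgraph (d n : nat) := {set tup d n}.

(* A copy of K^d_{p_1..p_d} in H: a permutation pi of [d] and sets S_i of V_i
   with |S_i| = p_(pi i) such that every tuple with x_i in S_i is an edge.
   [copy_containing H p e] : such a copy exists and contains the edge e. *)
Definition copy_containing d n (H : hgraph d n) (p : 'I_d -> nat) (e : tup d n) :=
  exists (pi : {perm 'I_d}) (S : 'I_d -> {set 'I_n}),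
    [/\ forall i, #|S i| = p (pi i),
        forall x : tup d n, (forall i, x i \in S i) -> x \in H
      & forall i, e i \in S i].

(* Weak saturation: the non-edges can be listed as s = e_1,...,e_m (each
   exactly once) so that adding e_j to H + e_1 + ... + e_(j-1) creates a
   (necessarily new) copy of K containing e_j. *)
Definition weakly_sat d n (p : 'I_d -> nat) (H : hgraph d n) :=
  exists s : seq (tup d n),
    [/\ uniq s, forall x, (x \in s) = (x \notin H)
      & forall s1 e s2, s = s1 ++ e :: s2 ->
          copy_containing (H :|: [set x in rcons s1 e]) p e].

(* W_n(p_1,...,p_d): minimum number of edges of a weakly saturated H.
   (The complete hypergraph setT is vacuously weakly saturated, so the
   minimum is over a nonempty family.) *)
Definition W d n (p : 'I_d -> nat) : nat :=
  #|[arg min_(H < [set: tup d n] | `[< weakly_sat p H >]) #|H|]|.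

(* x_(i): sorted entries of x (as elements of [n], i.e. value k+1 for the
   ordinal k); [xsorted x] is the increasing list x_(1) <= ... <= x_(d),
   indexed from 0. *)
Definition xsorted d n (x : tup d n) : seq nat :=
  sort leq [seq (x i).+1 | i <- enum 'I_d].

Definition G0 d n (p : 'I_d -> nat) : hgraph d n :=
  [set x : tup d n | ~~ [forall i : 'I_d, p i <= nth 0 (xsorted x) i]].

(* Main.v *)
Require Import Defs.
From mathcomp Require Import all_boot all_order all_fingroup.
From mathcomp Require Import boolp.
From mathcomp Require Import zify.

Definition sumt d n (x : tup d n) := \sum_i (x i : nat).
Arguments sumt {d n}.

Lemma card_lt n m : m <= n -> #|[set k : 'I_n | k < m]| = m.
Proof.
move=> Hm.
have -> : [set k : 'I_n | k < m] = widen_ord Hm @: [set: 'I_m].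
  apply/setP => k; rewrite inE; apply/idP/imsetP.
    move=> Hk; exists (Ordinal Hk) => //; exact: val_inj.
  by case=> j _ ->; rewrite /= ltn_ord.
by rewrite card_imset ?cardsT ?card_ord //; by move=> a b /(congr1 val) /= /val_inj.
Qed.

Lemma sum_lt d n (y e : tup d n) :
  (forall i, y i <= e i) -> y <> e -> sumt y < sumt e.
Proof.
move=> Hle Hne.
case: (boolP [exists i, y i != e i]) => [/existsP [i Hi]|Hn]; last first.
  case: Hne; apply/ffunP => i.
  by move: Hn => /existsPn /(_ i) /negPn /eqP.
rewrite /sumt (bigD1 i) //= [X in _ < X](bigD1 i) //=.
have H1 : \sum_(j | j != i) (y j : nat) <= \sum_(j | j != i) (e j : nat).
  by apply: leq_sum => j _; exact: Hle.
have H2 : y i < e i by rewrite ltn_neqAle Hi Hle.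
by rewrite -addSn leq_add.
Qed.

Lemma exists_perm d n (x : tup d n) (p : 'I_d -> nat) :
  (forall i, p i <= nth 0 (xsorted x) i) ->
  exists pi : {perm 'I_d}, forall i, p (pi i) <= (x i).+1.
Proof.
move=> Hp.
set L := [seq (x i).+1 | i <- enum 'I_d].
have HL : size L = d by rewrite size_map size_enum_ord.
have Hpe : perm_eq (xsorted x) L by rewrite /xsorted perm_sort.
case/(perm_iotaP 0): Hpe => Is HIs Hs.
rewrite HL in HIs.
have Hu : uniq Is by rewrite (perm_uniq HIs) iota_uniq.
have Hsz : size Is = d by rewrite (perm_size HIs) size_iota.
have Hlt : forall k : 'I_d, nth 0 Is k < d.
  move=> k; have : nth 0 Is k \in Is by rewrite mem_nth // Hsz.
  by rewrite (perm_mem HIs) mem_iota.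
pose f (k : 'I_d) : 'I_d := nth k (enum 'I_d) (nth 0 Is k).
have Hfv : forall k, val (f k) = nth 0 Is k.
  by move=> k; exact: (nth_enum_ord k (Hlt k)).
have finj : injective f.
  move=> k1 k2 /(congr1 val); rewrite !Hfv => /eqP.
  by rewrite nth_uniq ?Hsz // => /eqP /val_inj.
have Hk : forall k : 'I_d, nth 0 (xsorted x) k = (x (f k)).+1.
  move=> k; rewrite Hs (nth_map 0) ?Hsz //.
  by rewrite /L (nth_map k) // size_enum_ord.
exists (perm finj)^-1%g => i.
set k := (perm finj)^-1%g i.
have : f k = i by rewrite -[f k]permE /k permKV.
by move=> <-; rewrite -Hk.
Qed.

Lemma G0_ws d n (p : 'I_d -> nat) :
  (forall i : 'I_d, 1 <= p i) -> weakly_sat p (G0 n p).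
Proof.
move=> Hp1.
set G := G0 n p.
pose R := fun a b : tup d n => sumt a <= sumt b.
have Rtot : total R by move=> a b; exact: leq_total.
have Rtr : transitive R by move=> a b c; exact: leq_trans.
pose s := sort R (enum (~: G)).
have Hsort : sorted R s by exact: sort_sorted.
have Hmem : forall x, (x \in s) = (x \notin G).
  by move=> x; rewrite mem_sort mem_enum in_setC.
exists s; split => //.
  by rewrite sort_uniq enum_uniq.
move=> s1 e s2 Hs.
have He : e \in s by rewrite Hs mem_cat in_cons eqxx orbT.
rewrite Hmem /G /G0 inE negbK in He.
have [pi Hpi] := @exists_perm d n e p (fun i => (forallP He) i).
pose S i := [set k : 'I_n | (k < (p (pi i)).-1) || (k == e i)].
exists pi, S; split.
- move=> i.
  have -> : S i = e i |: [set k : 'I_n | k < (p (pi i)).-1].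
    by apply/setP => k; rewrite !inE orbC.
  have h1 := Hpi i; have h2 := Hp1 (pi i); have h3 := ltn_ord (e i).
  rewrite cardsU1 card_lt; last by lia.
  rewrite inE.
  have -> : (e i < (p (pi i)).-1) = false by apply/negbTE; rewrite -leqNgt; lia.
  simpl; lia.
- move=> y Hy.
  have Hle : forall i, y i <= e i.
    move=> i; move: (Hy i); rewrite inE => /orP [h|/eqP ->] //.
    have h1 := Hpi i; lia.
  rewrite inE.
  case: (y =P e) => [->|Hne].
    by apply/orP; right; rewrite inE mem_rcons in_cons eqxx.
  case: (boolP (y \in G)) => [HyG|HyG]; first by apply/orP; left.
  have Hys : y \in s by rewrite Hmem.
  have Hsl := @sum_lt d n y e Hle Hne.
  apply/orP; right; rewrite inE mem_rcons in_cons.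
  move: Hys; rewrite Hs mem_cat in_cons => /orP [-> | /orP [/eqP // | Hy2]].
    by rewrite !orbT.
  move: Hsort; rewrite Hs sorted_cat_cons => /andP [_].
  rewrite (path_sortedE Rtr) => /andP [/allP /(_ y Hy2)].
  rewrite /R; lia.
- by move=> i; rewrite inE eqxx orbT.
Qed.

Theorem lemma1 (d n : nat) (p : 'I_d -> nat) :
  0 < d ->
  (forall i : 'I_d, 1 <= p i) ->
  (forall i j : 'I_d, i <= j -> p i <= p j) ->
  (forall i : 'I_d, p i <= n) ->
  W n p <= #|G0 n p|.
Proof.
move=> _ Hp1 _ _.
rewrite /W.
case: arg_minnP.
  apply/asboolP; exists [::]; split => //.
    by move=> x; rewrite in_setT.
  by move=> s1 e s2; case: s1.
move=> H _ Hmin; apply: Hmin.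
by apply/asboolP; exact: G0_ws.
Qed.
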